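(* Let $d$ be a positive integer, $0\le\kappa<d$ real, and $K>0$. Let $\tau,\eta>0$ be constants, and for a positive integer $N$ put $r=\eta(\log N)^{\frac{d\kappa}{d-\kappa}}$ (taken to be an integer) and let $\mathcal{P}_I$ be the set of primes in $I=[\tau(\log N)^{\frac{d}{d-\kappa}},2\tau(\log N)^{\frac{d}{d-\kappa}}]$. Let $S\subseteq[N]^d$ be nonempty and occupy at most $Kp^{\kappa}$ residue classes modulo $p$ for every $p\in\mathcal{P}_I$. There is a constant $C_1$ (depending only on $K$ and $\kappa$) such that if $\eta\ge C_1\tau^\kappa$, then there are constants $c',c''>0$ independent of $N$ and $S$ such that, for all sufficiently large $N$, there exist an $r$-tuple $\mathcal{C}=(c_1,\ldots,c_r)\in S^r$ of elements of $S$ and a subset $S'\subseteq S$ with $|S'|\ge c'|S|$ such that for every $x\in S'$, $$\sum_{p\in\mathcal{P}_I}\mathbf{1}_{\exists i:\ x\equiv c_i \ (\mathrm{mod}\ p)}\,\log p\ \ge\ c''|I|.$$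
   Context: $\mathbf{1}_{Q}$ equals $1$ if the statement $Q$ holds and $0$ otherwise; congruence of vectors mod $p$ is coordinatewise; $|I|$ is the length of the interval $I$. *)

(* Defs.v *)
From HB Require Import structures.
From mathcomp Require Import all_boot all_order all_algebra.
From mathcomp Require Import reals exp.
Set Implicit Arguments. Unset Strict Implicit. Unset Printing Implicit Defensive.
Import Order.TTheory GRing.Theory Num.Theory.
Local Open Scope ring_scope.

(* A point of [N]^d = {1,...,N}^d : coordinate i is (val (x i)).+1. *)
Definition point (d N : nat) := {ffun 'I_d -> 'I_N}.
Definition coord (d N : nat) (x : point d N) (i : 'I_d) : nat := (val (x i)).+1.

Definition cong_mod (d N : nat) (p : nat) (x y : point d N) : bool :=
  [forall i, (coord x i == coord y i %[mod p])%N].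

Definition resid (d N : nat) (p : nat) (x : point d N) : seq nat :=
  [seq (coord x i %% p)%N | i <- enum (ordinal d)].

Definition nclasses (d N : nat) (p : nat) (S : {set point d N}) : nat :=
  size (undup [seq resid p x | x <- enum S]).

Definition Lscale (R : realType) (d : nat) (kappa : R) (N : nat) : R :=
  powR (ln (N%:R)) (d%:R / (d%:R - kappa)).

Definition rlen (R : realType) (d : nat) (kappa eta : R) (N : nat) : nat :=
  Num.truncn (eta * powR (ln (N%:R)) (d%:R * kappa / (d%:R - kappa))).

Definition primesI (R : realType) (d : nat) (kappa tau : R) (N : nat) : seq nat :=
  let L := Lscale d kappa N in
  [seq p <- iota 0 (Num.truncn (2 * tau * L)).+1 |
     prime p && (tau * L <= p%:R) && (p%:R <= 2 * tau * L)].

(* Main.v *)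
Require Import Defs.
From HB Require Import structures.
From mathcomp Require Import all_boot all_order all_algebra.
From mathcomp Require Import zify ring lra.
From mathcomp Require Import reals exp.
Import Order.TTheory GRing.Theory Num.Theory.

Lemma div2_term n q : 0 < q -> 2*(n%/q) <= (2*n)%/q <= 2*(n%/q) + 1.
Proof.
move=> q0.
have -> : 2 * n = (2 * (n %/ q)) * q + 2 * (n %% q).
  by rewrite {1}(divn_eq n q); rewrite mulnDr mulnA.
rewrite divnMDl // leq_addr /= leq_add2l -ltnS ltn_divLR //.
rewrite mul2n -addnn. have := ltn_pmod n q0. lia.
Qed.

Lemma divn_big n q : n < q -> n %/ q = 0.
Proof. exact: divn_small. Qed.

Lemma vbinE p n : prime p ->
  logn p 'C(n.*2, n) = \sum_(1 <= k < n.*2.+1) ((n.*2)%/p^k - 2*(n%/p^k)).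
Proof.
move=> pp.
have p1 : 1 < p by apply: prime_gt1.
have h := bin_fact (leq_addl n n).
rewrite addnK in h. rewrite -addnn.
have hf := logn_fact (n + n) pp.
rewrite -h lognM ?muln_gt0 ?fact_gt0 ?bin_gt0 ?leq_addl // lognM ?fact_gt0 // in hf.
rewrite !logn_fact // in hf.
have ext : \sum_(1 <= k < n.+1) n %/ p ^ k = \sum_(1 <= k < (n+n).+1) n %/ p ^ k.
  rewrite (big_cat_nat _ (m:=1) (n:=n.+1) (p:=(n+n).+1)) //=; last by rewrite ltnS leq_addl.
  rewrite [X in _ = _ + X]big1_seq ?addn0 // => k /andP [_].
  rewrite mem_index_iota => /andP [hk _]. apply: divn_small.
  apply: leq_trans (ltn_expl _ p1). by apply: leq_trans hk.
rewrite ext in hf.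
have split : \sum_(1 <= k < (n + n).+1) (n + n) %/ p ^ k =
   \sum_(1 <= k < (n + n).+1) ((n + n) %/ p ^ k - 2 * (n %/ p ^ k))
   + 2 * \sum_(1 <= k < (n + n).+1) n %/ p ^ k.
  rewrite big_distrr -big_split /=; apply: eq_bigr => k _.
  have pk : 0 < p ^ k by rewrite expn_gt0 (ltnW p1).
  case/andP: (div2_term n (p ^ k) pk) => h1 _.
  by rewrite subnK // addnn -mul2n.
rewrite split in hf. lia.
Qed.

Lemma term_le1 n q : 0 < q -> (n.*2)%/q - 2*(n%/q) <= 1.
Proof. move=> q0; case/andP: (div2_term n q q0) => h1 h2. rewrite -mul2n. lia. Qed.

Lemma vbin_pow p n : prime p -> 0 < n -> p ^ (logn p 'C(n.*2, n)) <= n.*2.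
Proof.
move=> pp n0; have p1 := prime_gt1 pp.
set t := trunc_log p n.*2.
have ht : p ^ t <= n.*2 by apply: trunc_logP => //; rewrite double_gt0.
have tle : t <= n.*2 by apply: leq_trans ht; apply: ltnW; apply: ltn_expl.
suff : logn p 'C(n.*2, n) <= t.
  by move=> h; apply: leq_trans ht; apply: leq_pexp2l => //; apply: ltnW.
rewrite vbinE // (big_cat_nat _ (m:=1) (n:=t.+1)) //=.
rewrite [X in _ + X]big1_seq ?addn0; last first.
  move=> k /andP [_]; rewrite mem_index_iota => /andP [hk _].
  have : n.*2 < p ^ k.
    apply: leq_trans (trunc_log_ltn _ p1) _. by apply: leq_pexp2l => //; apply: ltnW.
  move=> hlt. rewrite divn_small // divn_small //.
apply: (@leq_trans (\sum_(1 <= k < t.+1) 1)).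
  apply: leq_sum => k _; apply: term_le1; by rewrite expn_gt0 (ltnW p1).
by rewrite sum_nat_const_nat muln1 subn1.
Qed.

Lemma divn_eqa m q a : 0 < q -> a * q <= m -> m < a.+1 * q -> m %/ q = a.
Proof.
move=> q0 h1 h2; apply/eqP; rewrite eqn_leq -ltnS ltn_divLR // h2 /=.
by rewrite leq_divRL.
Qed.

Lemma vbin_zero p n : prime p -> n.*2 < 3 * p -> p <= n -> n.*2 < p * p ->
  logn p 'C(n.*2, n) = 0.
Proof.
move=> pp h3 hpn hsq; have p1 := prime_gt1 pp.
rewrite vbinE //; apply: big1_seq => k /andP [_]; rewrite mem_index_iota => /andP [hk _].
case: k hk => // -[|k] _.
  rewrite expn1 (@divn_eqa n.*2 p 2) ?(@divn_eqa n p 1) //; try lia.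
have : p ^ 2 <= p ^ k.+2 by apply: leq_pexp2l; lia.
rewrite (expnS p 1) expn1.
move=> h; rewrite !divn_small //; lia.
Qed.

Lemma vbin_big p n : prime p -> 0 < n -> n.*2 < p -> logn p 'C(n.*2, n) = 0.
Proof.
move=> pp n0 hp; have := @vbin_pow p n pp n0.
case: (logn p _) => // v h.
have : p ^ 1 <= p ^ v.+1 by apply: leq_pexp2l; [apply: prime_gt0|].
rewrite expn1; lia.
Qed.

Lemma logn_fact_small p m : prime p -> m < p -> logn p m`! = 0.
Proof.
move=> pp hm; rewrite logn_fact //; apply: big1_seq => k /andP [_].
rewrite mem_index_iota => /andP [hk _]; apply: divn_small.
apply: leq_trans hm _; rewrite -[X in X <= _]expn1; apply: leq_pexp2l => //.
exact: prime_gt0.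
Qed.

Lemma vbin_odd_pos p k : prime p -> k.+1 < p -> p <= k.*2.+1 ->
  0 < logn p 'C(k.*2.+1, k).
Proof.
move=> pp h1 h2.
have hle : k <= k.*2.+1 by rewrite -addnn; lia.
have h := bin_fact hle.
move: h; rewrite (_ : k.*2.+1 - k = k.+1); last by rewrite -addnn; lia.
move=> h.
have hf : logn p (k.*2.+1)`! = logn p 'C(k.*2.+1, k) + logn p k`! + logn p k.+1`!.
  by rewrite -h lognM ?muln_gt0 ?fact_gt0 ?bin_gt0 // lognM ?fact_gt0 // addnA.
rewrite (@logn_fact_small p k) ?(@logn_fact_small p k.+1) ?addn0 // in hf; try lia.
rewrite -hf logn_fact // big_ltn ?ltnS //= expn1.
suff : 0 < k.*2.+1 %/ p by lia.
by rewrite divn_gt0 ?prime_gt0.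
Qed.

Lemma bin_odd_le k : 'C(k.*2.+1, k) <= 4 ^ k.
Proof.
have hs : 'C(k.*2.+1, k.+1) = 'C(k.*2.+1, k).
  rewrite -{1}(_ : k.*2.+1 - k = k.+1) ?bin_sub //; rewrite -addnn; lia.
have := expnDn 1 1 k.*2.+1.
rewrite -(big_mkord xpredT (fun i => 'C(k.*2.+1, i) * (1 ^ (k.*2.+1 - i) * 1 ^ i))).
rewrite (big_cat_nat _ (m:=0) (n:=k) (p:=k.*2.+2)) //=; last by rewrite -addnn; lia.
rewrite (big_cat_nat _ (m:=k) (n:=k.+2) (p:=k.*2.+2)) //=; try (by rewrite -?addnn; lia).
move=> E.
have E2 : \sum_(k <= i < k.+2) 'C(k.*2.+1, i) * (1 ^ (k.*2.+1 - i) * 1 ^ i) =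
  'C(k.*2.+1, k) + 'C(k.*2.+1, k.+1).
  by rewrite big_ltn // big_ltn // big_geq // addn0 !exp1n !muln1.
rewrite E2 hs in E.
have e4 : (1 + 1) ^ k.*2.+1 = 2 * 4 ^ k.
  by rewrite expnS -mul2n expnM.
rewrite e4 in E; lia.
Qed.

Lemma central_ge n : 4 ^ n <= n.*2.+1 * 'C(n.*2, n).
Proof.
elim: n => [|n IH] //.
have e1 := mul_bin_down n.*2.+1 n.
have e2 := mul_bin_diag n.*2.+2 n.
rewrite /= in e1 e2.
rewrite (_ : n.*2.+1 - n = n.+1) in e1; last by rewrite -addnn; lia.
rewrite doubleS expnS.
move: IH e1 e2; set A := 'C(n.*2, n); set B := 'C(n.*2.+1, n); set C := 'C(n.*2.+2, n.+1).
rewrite -!addnn. nia.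
Qed.

Local Open Scope ring_scope.

Section RE.
Variable R : realType.

Lemma lnnat_ge0 (p : nat) : 0 <= ln (p%:R : R).
Proof.
case: p => [|p]; first by rewrite ln0.
by apply: ln_ge0; rewrite ler1n.
Qed.

Lemma lterm_ge0 (p m : nat) : 0 <= (logn p m)%:R * ln (p%:R : R).
Proof. by rewrite mulr_ge0 ?lnnat_ge0. Qed.

Lemma ln_natX (p e : nat) : ln (((p ^ e)%N)%:R : R) = e%:R * ln (p%:R : R).
Proof.
case: p => [|p].
  case: e => [|e]; first by rewrite expn0 ln1 mul0r.
  by rewrite exp0n // !ln0 ?mulr0.
by rewrite natrX lnXn ?ltr0Sn // mulr_natl.
Qed.

Lemma ln_prod_nat (r : seq nat) (P : pred nat) (F : nat -> nat) :
  (forall i, (0 < F i)%N) ->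
  ln (((\prod_(i <- r | P i) F i)%N)%:R : R) = \sum_(i <- r | P i) ln ((F i)%:R : R).
Proof.
move=> Fp; elim: r => [|a r IH]; first by rewrite !big_nil ln1.
rewrite !big_cons; case: (P a) => //.
rewrite natrM lnM ?IH // posrE ltr0n //.
by rewrite prodn_gt0.
Qed.

Lemma lsum_eq (m B : nat) : (0 < m)%N -> (m < B)%N ->
  ln (m%:R : R) = \sum_(0 <= p < B) (logn p m)%:R * ln (p%:R : R).
Proof.
move=> m0 mB.
rewrite -{1}(partnT m0) /partn ln_prod_nat //.
rewrite (big_cat_nat _ (m:=0) (n:=m.+1) (p:=B)) //=.
rewrite [X in _ = _ + X]big1_seq ?addr0; last first.
  move=> k /andP [_]; rewrite mem_index_iota => /andP [hk _].
  by rewrite ltn_log0 ?mul0r.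
by apply: eq_bigr => p _; rewrite ln_natX.
Qed.

Lemma sum_widen (B B' : nat) (F : nat -> R) : (B <= B')%N -> (forall p, 0 <= F p) ->
  \sum_(0 <= p < B) F p <= \sum_(0 <= p < B') F p.
Proof.
move=> hB F0; rewrite (big_cat_nat _ (m:=0) (n:=B) (p:=B')) //=.
by rewrite lerDl sumr_ge0.
Qed.

Lemma lsum_le (m B : nat) : (0 < m)%N ->
  \sum_(0 <= p < B) (logn p m)%:R * ln (p%:R : R) <= ln (m%:R : R).
Proof.
move=> m0; rewrite (@lsum_eq m (maxn B m.+1)) //; last by rewrite leq_max leqnn orbT.
apply: sum_widen; first by rewrite leq_max leqnn.
by move=> p; apply: lterm_ge0.
Qed.

Definition th (B m : nat) : R :=
  \sum_(0 <= p < B) (if prime p && (p <= m)%N then ln (p%:R : R) else 0).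

Lemma ln4_ge0 : 0 <= ln (4 : R).
Proof. by apply: ln_ge0; rewrite ler1n. Qed.

Lemma primorial (m B : nat) : th B m <= m%:R * ln (4 : R).
Proof.
elim/ltn_ind: m B => m IH B.
have l4 := ln4_ge0.
have [m1|m1] := leqP m 1.
  have -> : th B m = 0.
    rewrite /th; apply: big1_seq => p _.
    case: (boolP (prime p)) => //= pp; have := prime_gt1 pp.
    by move=> h; case: (leqP p m) => // hp; lia.
  by rewrite mulr_ge0.
rewrite -(odd_double_half m) in m1 IH *.
set k := m./2.
case: (odd m) m1 IH => /= m1 IH.
-
  have k1 : (0 < k)%N by move: m1; rewrite -addnn; lia.
  set C := 'C(k.*2.+1, k).
  apply: (@le_trans _ _ (th B k.+1 + \sum_(0 <= p < B) (logn p C)%:R * ln (p%:R : R))).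
    rewrite /th -big_split /=; apply: ler_sum => p _.
    case: (boolP (prime p)) => //= pp; last by rewrite add0r lterm_ge0.
    case: (leqP p k.+1) => hp1.
      by rewrite (leq_trans hp1) ?lerDl ?lterm_ge0 //; rewrite -addnn; lia.
    case: leqP => hp2; last by rewrite add0r lterm_ge0.
    rewrite add0r ler_peMl ?lnnat_ge0 // ler1n.
    exact: vbin_odd_pos.
  have C0 : (0 < C)%N by rewrite bin_gt0 -addnn; lia.
  apply: (@le_trans _ _ (k.+1%:R * ln 4 + ln (C%:R))).
    rewrite lerD ?lsum_le //; apply: IH; rewrite -addnn; lia.
  have : ln (C%:R : R) <= k%:R * ln 4.
    rewrite mulr_natl -lnXn ?ltr0n // -natrX ler_ln ?posrE ?ltr0n ?expn_gt0 //.
    by rewrite ler_nat bin_odd_le.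
  rewrite -addnn !natrD !mulrDl; lra.
-
  have k1 : (0 < k)%N by move: m1; rewrite -addnn; lia.
  have [k2|k2] := leqP k 1.
    have -> : k = 1%N by lia.
    apply: (@le_trans _ _ (th B 1 + \sum_(0 <= p < B) (logn p 2)%:R * ln (p%:R : R))).
      rewrite /th -big_split /=; apply: ler_sum => p _.
      case: (boolP (prime p)) => //= pp; last by rewrite add0r lterm_ge0.
      case: (leqP p 1) => hp1; first by have := prime_gt1 pp; lia.
      case: leqP => hp2; last by rewrite add0r lterm_ge0.
      have -> : p = 2%N by have := prime_gt1 pp; lia.
      by rewrite logn_prime // eqxx mul1r add0r.
    apply: (@le_trans _ _ (1%:R * ln 4 + ln (2%:R : R))).
      by rewrite lerD ?lsum_le //; apply: IH.
    have : ln (2%:R : R) <= ln 4 by rewrite ler_ln ?posrE ?ltr0n // ler_nat.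
    rewrite (_ : (1.*2)%:R = 2%:R :> R) //; lra.
  apply: (@le_trans _ _ (th B (k.*2.-1))).
    rewrite /th; apply: ler_sum => p _.
    case: (boolP (prime p)) => //= pp.
    case: (leqP p k.*2) => hp; last by case: ifP => // _; apply: lnnat_ge0.
    case: (leqP p k.*2.-1) => // hp'.
    have ep : p = k.*2 by lia.
    case: (even_prime pp) => [p2|op]; first by lia.
    by move: op; rewrite ep odd_double.
  apply: (le_trans (IH (k.*2.-1) _ B)); first by rewrite /k add0n; lia.
  rewrite ler_wpM2r // ler_nat; lia.
Qed.

Definition Dn (n : nat) : R :=
  \sum_(0 <= p < n.*2.+1) (if prime p && (n < p)%N then ln (p%:R : R) else 0).

Lemma logn_nonprime p m : ~~ prime p -> logn p m = 0%N.
Proof.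
move=> np; apply/eqP; rewrite -leqn0 leqNgt logn_gt0 mem_primes.
by rewrite (negbTE np).
Qed.

Lemma count_lt (B a : nat) : (\sum_(0 <= p < B) (p < a)%N <= a)%N.
Proof.
apply: (@leq_trans (\sum_(0 <= p < maxn B a) (p < a)%N)).
  rewrite (big_cat_nat _ (m:=0) (n:=B) (p:=maxn B a)) //= ?leq_addr //.
  by rewrite leq_max leqnn.
rewrite (big_cat_nat _ (m:=0) (n:=a) (p:=maxn B a)) //=; last by rewrite leq_max leqnn orbT.
rewrite [X in (_ + X <= _)%N]big1_seq ?addn0.
  rewrite (@eq_big_nat _ _ _ 0 a _ (fun=> 1%N)); last by move=> i /andP [_ ->].
  by rewrite sum_nat_const_nat muln1 subn0.
by move=> i /andP [_]; rewrite mem_index_iota => /andP [hi _]; rewrite ltnNge hi.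
Qed.

Lemma lnC_upper (n a : nat) : (0 < n)%N -> (n.*2 < a * a)%N ->
  ln (('C(n.*2, n))%:R : R) <=
  a%:R * ln (n.*2%:R : R) + th (n.*2.+1) (n.*2 %/ 3) + Dn n.
Proof.
move=> n0 ha.
set C := 'C(n.*2, n).
have C0 : (0 < C)%N by rewrite bin_gt0 -addnn leq_addl.
rewrite (@lsum_eq C (maxn C.+1 n.*2.+1)) //; last by rewrite leq_max leqnn.
rewrite (big_cat_nat _ (m:=0) (n:=n.*2.+1) (p:=maxn C.+1 n.*2.+1)) //=; last by rewrite leq_max leqnn orbT.
rewrite [X in X + _ <= _](_ : _ = \sum_(0 <= p < n.*2.+1) (logn p C)%:R * ln (p%:R : R)) //.
rewrite [X in _ + X <= _]big1_seq ?addr0; last first.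
  move=> p /andP [_]; rewrite mem_index_iota => /andP [hp _].
  case: (boolP (prime p)) => pp; last by rewrite logn_nonprime // mul0r.
  by rewrite vbin_big // mul0r.
have l2n : 0 <= ln (n.*2%:R : R) by apply: lnnat_ge0.
apply: (@le_trans _ _ (\sum_(0 <= p < n.*2.+1)
   (((p * p <= n.*2)%N)%:R * ln (n.*2%:R : R)
    + (if prime p && (p <= n.*2 %/ 3)%N then ln (p%:R : R) else 0)
    + (if prime p && (n < p)%N then ln (p%:R : R) else 0)))).
  apply: ler_sum => p _.
  have nn1 : 0 <= ((p * p <= n.*2)%N)%:R * ln (n.*2%:R : R) by rewrite mulr_ge0.
  have nn2 : 0 <= (if prime p && (p <= n.*2 %/ 3)%N then ln (p%:R : R) else 0).
    by case: ifP => // _; apply: lnnat_ge0.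
  have nn3 : 0 <= (if prime p && (n < p)%N then ln (p%:R : R) else 0).
    by case: ifP => // _; apply: lnnat_ge0.
  case: (boolP (prime p)) => pp; last first.
    by rewrite logn_nonprime // mul0r !addr_ge0.
  have hv := @vbin_pow p n pp n0; rewrite -/C in hv.
  case: (leqP (p * p) n.*2) => hsq.
    have h : (logn p C)%:R * ln (p%:R : R) <= ln (n.*2%:R : R).
      by rewrite -ln_natX ler_ln ?posrE ?ltr0n ?ler_nat ?pfactor_gt0 ?double_gt0.
    move: nn2 nn3; rewrite pp mul1r /= => nn2 nn3; lra.
  have p1 := prime_gt1 pp.
  have hv1 : (logn p C <= 1)%N.
    rewrite leqNgt; apply/negP => h2.
    have : (p ^ 2 <= p ^ logn p C)%N by apply: leq_pexp2l; lia.
    rewrite (expnS p 1) expn1; lia.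
  move: nn2 nn3; rewrite pp (_ : false%:R = 0 :> R) // mul0r add0r /= => nn2 nn3.
  case E: (logn p C) hv1 hv => [|[|//]] _ hv.
    rewrite (_ : (0%N)%:R = 0 :> R) // mul0r; lra.
  rewrite (_ : (1%N)%:R = 1 :> R) // mul1r.
  have lp := lnnat_ge0 p.
  case: (leqP p (n.*2 %/ 3)) => h3.
    rewrite /=; lra.
  case: (ltnP n p) => h4.
    rewrite /=; lra.
  exfalso.
  have := @vbin_zero p n pp; rewrite -/C.
  have : (n.*2 < 3 * p)%N.
    by move: h3; rewrite ltnNge leq_divRL // mulnC -ltnNge.
  by move=> h5 h6; have := h6 h5 h4 hsq; rewrite E.
rewrite !big_split /= lerD // lerD //.
  rewrite -big_distrl /= -natr_sum ler_wpM2r // ler_nat.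
  apply: leq_trans (count_lt (n.*2.+1) a); apply: leq_sum => p _.
  case: (leqP (p * p) n.*2) => // hs.
  have : (p < a)%N.
    rewrite ltnNge; apply/negP => hap; have := leq_mul hap hap; lia.
  by move=> ->.
Qed.

Lemma lnC_lower (n : nat) :
  n%:R * ln (4 : R) - ln (n.*2.+1%:R : R) <= ln (('C(n.*2, n))%:R : R).
Proof.
have C0 : (0 < 'C(n.*2, n))%N by rewrite bin_gt0 -addnn leq_addl.
have h : ln (((4 ^ n)%N)%:R : R) <= ln (((n.*2.+1 * 'C(n.*2, n))%N)%:R : R).
  by rewrite ler_ln ?posrE ?ltr0n ?muln_gt0 ?expn_gt0 // ler_nat central_ge.
rewrite ln_natX natrM lnM ?posrE ?ltr0n // in h.
lra.
Qed.

Lemma D_lower (n a : nat) : (0 < n)%N -> (n.*2 < a * a)%N ->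
  n%:R * ln (4 : R) / 3 - ln (n.*2.+1%:R : R) - a%:R * ln (n.*2%:R : R) <= Dn n.
Proof.
move=> n0 ha.
have h1 := lnC_lower n.
have h2 := @lnC_upper n a n0 ha.
have h3 := primorial (n.*2 %/ 3) (n.*2.+1).
have l4 := ln4_ge0.
have h4 : ((n.*2 %/ 3)%N)%:R * 3 <= (n.*2)%:R :> R.
  by rewrite -natrM ler_nat leq_trunc_div.
have hn2 : (n.*2)%:R = 2 * n%:R :> R by rewrite -mul2n natrM.
have h5 : ((n.*2 %/ 3)%N)%:R * ln (4:R) <= (2 * n%:R) / 3 * ln 4.
  rewrite ler_wpM2r // ler_pdivlMr //; lra.
lra.
Qed.

Lemma cheb_nat : exists c : R, 0 < c /\ exists n0 : nat, forall n : nat, (n0 <= n)%N ->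
  c * n%:R <= Dn n.
Proof.
set A : R := ln 4 / 3.
have l4 : 0 < ln (4 : R) by apply: ln_gt0; rewrite ltr1n.
have l4' : ln (4 : R) < 4 by apply: ln_sublinear.
have A0 : 0 < A by rewrite /A divr_gt0.
have A1 : A <= 4 / 3 by rewrite /A ler_pM2r ?invr_gt0 //; apply: ltW.
set W0 : R := 100 / A + 1.
have W01 : 1 <= W0 by rewrite /W0 lerDr divr_ge0 // ltW.
exists (A / 2); split; first by rewrite divr_gt0.
exists (Num.truncn (W0 ^+ 4)).+1 => n hn.
have n0 : (0 < n)%N by apply: leq_trans hn.
set y : R := n.*2.+1%:R.
have y0 : 0 < y by rewrite /y ltr0n.
set w := Num.sqrt (Num.sqrt y).
have w0 : 0 <= w by apply: sqrtr_ge0.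
have w2 : w ^+ 2 = Num.sqrt y by rewrite sqr_sqrtr // sqrtr_ge0.
have w4 : w ^+ 4 = y.
  by rewrite (_ : 4%N = (2 * 2)%N) // exprM w2 sqr_sqrtr // ltW.
have wW : W0 <= w.
  rewrite leNgt; apply/negP => hw.
  have W00 : 0 <= W0 by apply: le_trans W01.
  have : w ^+ 4 < W0 ^+ 4 by rewrite ltr_pXn2r ?nnegrE.
  rewrite w4 /y.
  have := truncnS_gt (W0 ^+ 4).
  move: hn; rewrite -(ler_nat R) => hn.
  have : n%:R <= n.*2.+1%:R :> R by rewrite ler_nat -addnn; lia.
  lra.
have w1 : 1 <= w by apply: le_trans wW.
set a := (Num.truncn (w ^+ 2)).+1.
have ha1 : w ^+ 2 < a%:R by apply: truncnS_gt.
have ha2 : a%:R <= w ^+ 2 + 1.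
  rewrite /a -addn1 natrD lerD2r truncn_le; exact: exprn_ge0.
have ha : (n.*2 < a * a)%N.
  have : y < (a * a)%N%:R.
    rewrite natrM -w4 (_ : 4%N = (2 + 2)%N) // exprD.
    have hw2 : 0 <= w ^+ 2 by apply: exprn_ge0.
    by rewrite ltr_pM // .
  by rewrite /y ltr_nat; lia.
have hD := @D_lower n a n0 ha.
have lnw : ln y <= 4 * w.
  rewrite -w4 lnXn; last by apply: (Order.PreorderTheory.lt_le_trans ltr01 w1).
  have := ln_sublinear (Order.PreorderTheory.lt_le_trans ltr01 w1).
  rewrite mulr_natl; lra.
have ln2n : ln (n.*2%:R : R) <= ln y.
  by rewrite ler_ln ?posrE ?ltr0n ?double_gt0 // ler_nat.
have hn2 : 2 * n%:R + 1 = y by rewrite /y -addn1 -addnn !natrD; lra.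
have Aw : 100 <= A * w.
  have : 100 / A <= w by move: wW; rewrite /W0; lra.
  by rewrite ler_pdivrMr // mulrC.
have w3 : w <= w ^+ 3.
  rewrite (exprS w 2); have h : 1 <= w ^+ 2 by apply: exprn_ege1.
  nra.
have e1 : A * w ^+ 4 = (A * w) * w ^+ 3 by rewrite exprSr (mulrC (w ^+ 3)) mulrA.
have e2 : 100 * w ^+ 3 <= (A * w) * w ^+ 3 by rewrite ler_wpM2r // exprn_ge0.
have e3 : ln (n.*2%:R : R) <= 4 * w by apply: le_trans ln2n lnw.
have e4 : a%:R * ln (n.*2%:R : R) <= (w ^+ 2 + 1) * (4 * w).
  apply: le_trans (ler_wpM2l _ e3) _; first by apply: ler0n.
  by rewrite ler_wpM2r // mulr_ge0.
have e5 : w ^+ 3 = w ^+ 2 * w by rewrite exprSr.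
move: hD; rewrite -/y -/A.
have eA : n%:R * ln (4:R) / 3 = A * n%:R by rewrite /A; ring.
rewrite eA => hD.
have : A * (2 * n%:R + 1) = (A * w) * w ^+ 3 by rewrite hn2 -w4 e1.
nra.
Qed.


Definition plist (x : R) : seq nat :=
  [seq p <- iota 0 (Num.truncn (2 * x)).+1 |
     prime p && (x <= p%:R) && (p%:R <= 2 * x)].

Lemma cheb_real : exists c0 : R, 0 < c0 /\ exists X0 : R, forall x : R, X0 <= x ->
  c0 * x <= \sum_(p <- plist x) ln (p%:R : R).
Proof.
have [c [c0 [n0 hc]]] := cheb_nat.
exists (c / 2); split; first by rewrite divr_gt0.
exists (n0%:R + 2) => x hx.
have x0 : 0 <= x by apply: le_trans hx; rewrite addr_ge0.
set n := Num.truncn x.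
have hn1 : n%:R <= x by rewrite truncn_le.
have hn2 : x < n.+1%:R by apply: truncnS_gt.
have nn0 : (n0 < n)%N.
  rewrite -(ltr_nat R); move: hn2; rewrite -addn1 natrD; lra.
have := hc n (ltnW nn0).
have hnx : c / 2 * x <= c * n%:R.
  have : x <= 2 * n%:R.
    have : (1 <= n)%N by apply: leq_trans nn0.
    rewrite -(ler_nat R) => h1; move: hn2; rewrite -addn1 natrD; lra.
  move=> h; nra.
move=> hD; apply: le_trans hnx _; apply: le_trans hD _.
rewrite /plist big_filter big_mkcond /Dn.
have -> : iota 0 (Num.truncn (2 * x)).+1 = index_iota 0 (Num.truncn (2 * x)).+1.
  by rewrite /index_iota subn0.
have h2n : (n.*2 <= Num.truncn (2 * x))%N.
  rewrite truncn_ge_nat ?mulr_ge0 // -mul2n natrM.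
  by rewrite ler_wpM2l.
apply: le_trans (@sum_widen n.*2.+1 (Num.truncn (2 * x)).+1 _ _ _).
- rewrite big_seq [X in _ <= X]big_seq; apply: ler_sum => p.
  rewrite mem_index_iota => /andP [_ hp2].
  have nn : 0 <= (if prime p && (x <= p%:R) && (p%:R <= 2 * x) then ln (p%:R : R) else 0).
    by case: ifP => // _; apply: lnnat_ge0.
  case: (boolP (prime p)) => pp //=; rewrite pp /= in nn.
  case: (ltnP n p) => hp //=.
  have hpx : x <= p%:R.
    apply: ltW; apply: lt_le_trans hn2 _; by rewrite ler_nat.
  have hpx2 : p%:R <= 2 * x.
    apply: le_trans (_ : n.*2%:R <= _).
      by rewrite ler_nat -ltnS.
    by rewrite -mul2n natrM ler_wpM2l.
  by rewrite hpx hpx2.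
- by rewrite ltnS.
- by move=> p; case: ifP => // _; apply: lnnat_ge0.
Qed.

End RE.

Local Close Scope ring_scope.

Lemma bern_aux (a b r : nat) : a ^ r * (a + r * b) <= a * (a + b) ^ r.
Proof.
elim: r => [|r IH]; first by rewrite !expn0 mul0n addn0 mul1n muln1.
rewrite !expnS; move: IH; set X := a ^ r; set Y := (a + b) ^ r => IH.
have h := leq_mul (leqnn (a + b)) IH.
nia.
Qed.

Lemma bern (a b r : nat) : r * b * a ^ r <= (a + b) ^ r.+1.
Proof.
apply: (@leq_trans (a ^ r * (a + r * b))); first by rewrite mulnC leq_mul2l leq_addl orbT.
apply: leq_trans (bern_aux a b r) _.
by rewrite expnS leq_mul2r leq_addr orbT.
Qed.

Local Open Scope ring_scope.

Section Avg.
Variable R : realType.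

Lemma bigD1_zero (U : eqType) (u : seq U) (a : U) (F : U -> R) :
  uniq u -> a \in u ->
  \sum_(v <- u) (if v == a then F v else 0) = F a.
Proof.
move=> uu au; rewrite (bigD1_seq a) //= eqxx big1 ?addr0 //.
by move=> v /negbTE ->.
Qed.

Lemma sum_inv_class (T : finType) (U : eqType) (f : T -> U) (S : {set T}) :
  \sum_(x in S) ((#|[set y in S | f y == f x]|)%:R)^-1 =
  (size (undup [seq f x | x <- enum S]))%:R :> R.
Proof.
set s := enum S; set u := undup [seq f x | x <- s].
set h := fun v => ((#|[set y in S | f y == v]|)%:R)^-1 : R.
rewrite (eq_bigr (fun x => h (f x))) // -big_enum -/s.
rewrite (eq_big_seq (fun x => \sum_(v <- u) (if v == f x then h v else 0))); last first.
  move=> x xs; rewrite bigD1_zero // ?undup_uniq // mem_undup map_f //.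
rewrite exchange_big /=.
rewrite (eq_big_seq (fun=> 1)); last first.
  move=> v vu.
  rewrite -big_mkcond /=.
  have hc : \sum_(x <- s | v == f x) h v = (count (fun x => v == f x) s)%:R * h v.
    rewrite -sum1_count natr_sum big_distrl /=; apply: eq_bigr => x _; by rewrite mul1r.
  have hk : count (fun x => v == f x) s = #|[set y in S | f y == v]|.
    rewrite -sum1_count /s big_enum_cond -sum1_card; apply: eq_bigl => y.
    by rewrite !inE eq_sym.
  rewrite hc hk /h mulfV // pnatr_eq0 -lt0n.
  move: vu; rewrite mem_undup => /mapP [x xs ->].
  apply/card_gt0P; exists x; rewrite !inE eqxx andbT.
  by rewrite -(mem_enum (mem S)).
by rewrite -sum1_size natr_sum.
Qed.

Lemma cong_resid d N p (x y : point d N) : cong_mod p x y = (resid p x == resid p y).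
Proof.
apply/forallP/eqP => [h|h].
  by rewrite /resid; apply/eq_in_map => i _; apply/eqP; exact: h i.
move=> i; apply/eqP.
have := (eq_in_map _ _ _).2 h i; apply.
by rewrite mem_enum.
Qed.

Lemma ffun_onD (T : finType) (S : {set T}) (Q : pred T) (r : nat) (C : {ffun 'I_r -> T}) :
  (C \in ffun_on (S :\: [set y | Q y])) = (C \in ffun_on S) && ~~ [exists i, Q (C i)].
Proof.
apply/ffun_onP/andP => [h|[/ffun_onP h1 /existsPn h2] i].
  split.
    by apply/ffun_onP => i; have := h i; rewrite in_setD => /andP [_ ->].
  apply/existsPn => i; have := h i; rewrite in_setD inE => /andP [] //.
by rewrite in_setD inE h1 (h2 i).
Qed.

Lemma count_hit (T : finType) (S : {set T}) (Q : pred T) (r : nat) :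
  \sum_(C in ffun_on S) ((if [exists i : 'I_r, Q (C i)] then 1 else 0) : R) =
  (#|S| ^ r)%:R - ((#|S| - #|[set y in S | Q y]|) ^ r)%:R.
Proof.
have e1 : \sum_(C : {ffun 'I_r -> T} | C \in ffun_on S) (1 : R) = (#|S| ^ r)%:R.
  by rewrite sumr_const card_ffun_on card_ord.
have e2 : \sum_(C : {ffun 'I_r -> T} | C \in ffun_on S) ((if ~~ [exists i : 'I_r, Q (C i)] then 1 else 0) : R) =
  ((#|S| - #|[set y in S | Q y]|) ^ r)%:R.
  have -> : (#|S| - #|[set y in S | Q y]|)%N = #|S :\: [set y | Q y]|.
    by rewrite cardsD setIdE.
  have e3 : \sum_(C : {ffun 'I_r -> T} | C \in ffun_on (S :\: [set y | Q y])) (1:R)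
     = (#|S :\: [set y | Q y]| ^ r)%:R by rewrite sumr_const card_ffun_on card_ord.
  rewrite -e3 big_mkcond [RHS]big_mkcond /=.
  apply: eq_bigr => C _; rewrite ffun_onD.
  by case: (C \in ffun_on S); case: [exists i, Q (C i)].
rewrite -e1 -e2 -sumrB; apply: eq_bigr => C _.
by case: [exists i, Q (C i)]; rewrite ?subr0 ?subrr.
Qed.

Lemma class_bound (d N p r : nat) (S : {set point d N}) : (0 < r)%N ->
  (2 * nclasses p S <= r)%N ->
  \sum_(x in S) (((#|S| - #|[set y in S | cong_mod p x y]|) ^ r)%N%:R : R)
    <= ((#|S| ^ r.+1)%N)%:R / 2.
Proof.
move=> r0 hm.
set n := #|S|.
have hk : forall x, x \in S ->
   (((n - #|[set y in S | cong_mod p x y]|) ^ r)%N%:R : R) <=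
   ((n ^ r.+1)%N)%:R / r%:R * (#|[set y in S | cong_mod p x y]|%:R)^-1.
  move=> x xS; set k := #|[set y in S | cong_mod p x y]|.
  have k1 : (0 < k)%N.
    apply/card_gt0P; exists x; rewrite inE xS /=.
    by apply/forallP => i.
  have kn : (k <= n)%N by apply: subset_leq_card; apply/subsetP => y; rewrite inE => /andP [].
  have hb := bern (n - k) k r.
  rewrite subnK // in hb.
  have hbR : (r%:R * k%:R * ((n - k) ^ r)%N%:R : R) <= ((n ^ r.+1)%N)%:R.
    by rewrite -!natrM ler_nat.
  have r0' : (0 : R) < r%:R by rewrite ltr0n.
  have k0' : (0 : R) < k%:R by rewrite ltr0n.
  rewrite -mulrA -invfM ler_pdivlMr ?mulr_gt0 //.
  by rewrite mulrC.
apply: le_trans (ler_sum _ hk) _.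
rewrite -mulr_sumr.
have -> : \sum_(i in S) (#|[set y in S | cong_mod p i y]|%:R)^-1 = (nclasses p S)%:R :> R.
  rewrite -(@sum_inv_class _ _ (resid p) S) /nclasses; apply: eq_bigr => x _.
  congr (_%:R^-1); apply: eq_card => y; rewrite !inE cong_resid eq_sym //.
have hn : (0 : R) <= ((n ^ r.+1)%N)%:R by apply: ler0n.
have r0' : (0 : R) < r%:R by rewrite ltr0n.
have hmR : 2 * (nclasses p S)%:R <= r%:R :> R by rewrite -natrM ler_nat.
rewrite -mulrA ler_wpM2l //.
rewrite mulrC ler_pdivrMr // mulrC ler_pdivlMr ?ltr0n //; lra.
Qed.

Lemma averaging (d N : nat) (S : {set point d N}) (P : seq nat) (r : nat) :
  S != set0 -> (0 < r)%N -> (forall p, p \in P -> (2 * nclasses p S <= r)%N) ->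
  exists C : {ffun 'I_r -> point d N}, (forall i, C i \in S) /\
   #|S|%:R * (\sum_(p <- P) ln (p%:R : R)) / 2 <=
   \sum_(x in S) \sum_(p <- P) (if [exists i, cong_mod p x (C i)] then ln (p%:R : R) else 0).
Proof.
move=> Sn0 r0 hP.
have [x0 x0S] := set0Pn _ Sn0.
set n := #|S|.
set W := \sum_(p <- P) ln (p%:R : R).
set g := fun C : {ffun 'I_r -> point d N} =>
  \sum_(x in S) \sum_(p <- P) (if [exists i, cong_mod p x (C i)] then ln (p%:R : R) else 0).
set A := [pred C : {ffun 'I_r -> point d N} | C \in ffun_on S].
have A0 : A [ffun=> x0] by rewrite /A /=; apply/ffun_onP => i; rewrite ffunE.
have cardA : \sum_(C | A C) (1 : R) = (n ^ r)%N%:R.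
  by rewrite sumr_const card_ffun_on card_ord.
have hW : 0 <= W by rewrite /W sumr_ge0 // => p _; apply: lnnat_ge0.
have key : (n ^ r)%N%:R * (n%:R * W / 2) <= \sum_(C | A C) g C.
  rewrite /g exchange_big /=.
  rewrite (eq_bigr (fun x => \sum_(p <- P) ln (p%:R : R) *
      ((n ^ r)%N%:R - ((n - #|[set y in S | cong_mod p x y]|) ^ r)%N%:R))); last first.
    move=> x xS; rewrite exchange_big /=; apply: eq_bigr => p _.
    rewrite -(@count_hit _ S (cong_mod p x) r) mulr_sumr; apply: eq_bigr => C _.
    by case: ifP; rewrite ?mulr1 ?mulr0.
  rewrite exchange_big /=.
  apply: (@le_trans _ _ (\sum_(p <- P) ln (p%:R : R) * ((n ^ r.+1)%N%:R / 2))).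
    rewrite -mulr_suml -/W.
    rewrite expnS natrM.
    suff -> : W * ((n%:R * (n ^ r)%N%:R) / 2) = (n ^ r)%N%:R * (n%:R * W / 2) by []. ring.
  rewrite big_seq [X in _ <= X]big_seq; apply: ler_sum => p pP.
  rewrite -mulr_sumr; apply: ler_wpM2l; first exact: lnnat_ge0.
  rewrite sumrB sumr_const -/n.
  have := @class_bound d N p r S r0 (hP p pP); rewrite -/n.
  rewrite -mulr_natr natrX exprS natrX; lra.
case: (@arg_maxP _ _ _ _ A g A0) => Cm ACm hmax.
exists Cm; split; first by move=> i; move/ffun_onP: ACm.
have : \sum_(C | A C) g C <= (n ^ r)%N%:R * g Cm.
  rewrite -cardA mulr_suml; apply: ler_sum => C AC; rewrite mul1r; exact: hmax.
move=> h2; have h3 := le_trans key h2.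
have nr : (0 : R) < (n ^ r)%N%:R.
  by rewrite ltr0n expn_gt0 card_gt0 Sn0.
rewrite -/(g Cm); move: h3; by rewrite ler_pM2l // mulrA.
Qed.

End Avg.

Local Open Scope ring_scope.

Lemma primesI_plist (R : realType) d (kappa tau : R) N :
  primesI d kappa tau N = @plist R (tau * Lscale d kappa N).
Proof. by rewrite /primesI /plist /= !mulrA. Qed.

Lemma nclasses_gt0 d N p (S : {set point d N}) : S != set0 -> (0 < nclasses p S)%N.
Proof.
case/set0Pn => x xS; rewrite /nclasses lt0n size_eq0.
apply/eqP => h; have : resid p x \in undup [seq resid p x | x <- enum S].
  by rewrite mem_undup map_f // mem_enum.
by rewrite h.
Qed.

Theorem proposition3p1 (R : realType) (d : nat) (kappa K : R) :
  (0 < d)%N -> 0 <= kappa -> kappa < d%:R -> 0 < K ->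
  exists C1 : R,
  forall tau eta : R, 0 < tau -> 0 < eta -> C1 * powR tau kappa <= eta ->
  exists c' c'' : R, 0 < c' /\ 0 < c'' /\
  exists N0 : nat, forall N : nat, (N0 <= N)%N ->
  forall S : {set point d N}, S != set0 ->
    (forall p : nat, p \in primesI d kappa tau N ->
       (nclasses p S)%:R <= K * powR (p%:R) kappa) ->
    exists (C : 'I_(rlen d kappa eta N) -> point d N) (S' : {set point d N}),
      (forall i, C i \in S) /\ S' \subset S /\
      c' * (#|S|%:R) <= (#|S'|%:R) /\
      forall x, x \in S' ->
        c'' * (tau * Lscale d kappa N) <=
        \sum_(p <- primesI d kappa tau N)
           (if [exists i, cong_mod p x (C i)] then ln (p%:R) else 0).
Proof.
move=> d0 k0 kd K0.
have [c0 [c00 [X0 hcheb]]] := @cheb_real R.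
exists (4 * K * powR 2 kappa) => tau eta t0 e0 hC1.
exists (1/4), (c0 / 4); split; first by lra.
split; first by rewrite divr_gt0.
set M : R := 1 + `|X0| / tau.
have l2 : (0 : R) < ln 2 by apply: ln_gt0; rewrite ltr1n.
set k := (Num.truncn (M / ln 2)).+1.
exists (2 ^ k)%N => N hN S Sn0 hS.
have hlnN : M <= ln (N%:R : R).
  have h1 : M < k%:R * ln 2.
    by rewrite -ltr_pdivrMr //; apply: truncnS_gt.
  apply: ltW; apply: lt_le_trans h1 _.
  rewrite -ln_natX ler_ln ?posrE ?ltr0n ?expn_gt0 // ?ler_nat //.
  by apply: leq_trans hN; rewrite expn_gt0.
have M1 : 1 <= M by rewrite /M lerDl divr_ge0 // ltW.
have lnN1 : 1 <= ln (N%:R : R) by apply: le_trans hlnN.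
set L := Lscale d kappa N.
have dk : 0 < d%:R - kappa by rewrite subr_gt0.
have e1 : 1 <= d%:R / (d%:R - kappa).
  by rewrite ler_pdivlMr // mul1r lerBlDr lerDl.
have LlnN : ln (N%:R : R) <= L by apply: le1r_powR.
have L0 : 0 < L by apply: lt_le_trans LlnN; apply: lt_le_trans lnN1.
set x := tau * L.
have hx : X0 <= x.
  have : `|X0| <= tau * ln (N%:R : R).
    have : `|X0| / tau <= ln (N%:R : R) by move: hlnN; rewrite /M; lra.
    by rewrite ler_pdivrMr // mulrC.
  move=> h; apply: le_trans (ler_norm X0) _; apply: le_trans h _.
  by rewrite ler_wpM2l // ltW.
have x0 : 0 < x by rewrite mulr_gt0.
have hW := hcheb x hx.
rewrite primesI_plist -/L -/x in hS *.
set P := @plist R x.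
set W := \sum_(p <- P) ln (p%:R : R).
have W0 : 0 < W by apply: lt_le_trans hW; rewrite mulr_gt0.
set r := rlen d kappa eta N.
have hLk : powR (ln (N%:R : R)) (d%:R * kappa / (d%:R - kappa)) = powR L kappa.
  by rewrite /L /Lscale -powRrM mulrAC.
have hm : forall p, p \in P -> (4 * nclasses p S <= r)%N.
  move=> p pP.
  have hp2x : p%:R <= 2 * x.
    by move: pP; rewrite /P /plist mem_filter => /andP [/andP [_ ->]].
  have h1 := hS p pP.
  have h2 : powR (p%:R : R) kappa <= powR (2 * x) kappa.
    by apply: ge0_ler_powR; rewrite ?nnegrE // mulr_ge0 // ltW.
  have h3 : powR (2 * x) kappa = powR 2 kappa * (powR tau kappa * powR L kappa).
    by rewrite powRM ?mulr_ge0 ?ltW // /x powRM // ltW.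
  have h4 : ((4 * nclasses p S)%N%:R : R) <= eta * powR L kappa.
    rewrite natrM.
    have hp0 : 0 <= powR L kappa by apply: powR_ge0.
    have hk2 : 0 <= powR (2 : R) kappa by apply: powR_ge0.
    have ht : 0 <= powR tau kappa by apply: powR_ge0.
    apply: (@le_trans _ _ (4 * K * powR 2 kappa * powR tau kappa * powR L kappa)).
      have : K * powR (p%:R) kappa <= K * (powR 2 kappa * (powR tau kappa * powR L kappa)).
        by rewrite -h3 ler_wpM2l // ltW.
      move: h1; nra.
    by rewrite ler_wpM2r.
  have : ((4 * nclasses p S)%N%:R : R) < r.+1%:R.
    apply: le_lt_trans h4 _; rewrite /r /rlen hLk; exact: truncnS_gt.
  by rewrite ltr_nat ltnS.
have hm2 : forall p, p \in P -> (2 * nclasses p S <= r)%N.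
  by move=> p pP; apply: leq_trans (hm p pP); rewrite leq_mul2r /= orbT.
have Pn : P != [::].
  apply/eqP => P0; move: W0; rewrite /W P0 big_nil; lra.
have r0 : (0 < r)%N.
  have [p pP] : exists p, p \in P.
    by move: Pn; case: (P) => // a l _; exists a; rewrite mem_head.
  apply: leq_trans (hm p pP).
  by rewrite muln_gt0 /= nclasses_gt0.
have [C [CS hC]] := @averaging R d N S P r Sn0 r0 hm2.
set f := fun y => \sum_(p <- P) (if [exists i, cong_mod p y (C i)] then ln (p%:R : R) else 0).
set S' := [set y in S | W / 4 <= f y].
exists (fun i => C i), S'.
split; first by [].
split; first by apply/subsetP => y; rewrite inE => /andP [].
split; last first.
  move=> y; rewrite inE => /andP [_ hy].
  apply: le_trans hy.
  move: hW; rewrite -/W -/x; lra.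
have fW : forall y, f y <= W.
  move=> y; rewrite /f /W; apply: ler_sum => p _; case: ifP => // _; apply: lnnat_ge0.
have hpt : forall y, y \in S -> f y <= (if y \in S' then W else 0) + W / 4.
  move=> y yS; rewrite inE yS /=; have := fW y; have W0' := W0.
  case: (leP (W / 4) (f y)) => h /=; lra.
have hsum : \sum_(y in S) f y <= \sum_(y in S) ((if y \in S' then W else 0) + W / 4).
  by apply: ler_sum.
rewrite big_split /= sumr_const in hsum.
have hS'c : \sum_(i in S) (if i \in S' then W else 0) = #|S'|%:R * W.
  rewrite -big_mkcondr /= sumr_const mulr_natl; congr (_ *+ _).
  apply: eq_card => y; rewrite unfold_in /= [in RHS]inE.
  by rewrite [y \in S']inE andbA andbb.
rewrite hS'c in hsum.
have h := le_trans hC hsum.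
rewrite -/W -[W / 4 *+ _]mulr_natl in h.
have : #|S|%:R * W / 4 <= #|S'|%:R * W.
  have e : #|S|%:R * W / 2 - #|S|%:R * (W / 4) = #|S|%:R * W / 4 :> R by field.
  lra.
rewrite mulrAC ler_pM2r //; lra.
Qed.
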